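(* For all integers $r, k \geq 2$, $$ P_r(k) \geq P_{r-1}(k) + f_{k,k+1}\big(P_r(k)\big). $$
   Context: A colour pattern on a vertex set $V$ is a sequence $G_1,\dots,G_r$ ($r\ge1$) of pairwise edge-disjoint graphs all having vertex set $V$; it is $K_{k+1}$-free if no $G_i$ contains $K_{k+1}$. Given a colour pattern $G_1,\dots,G_r$ on $V$ and a colouring $c: V \to [r]$, a strongly monochromatic $K_k$ is a set of $k$ vertices all receiving the same colour $i$ under $c$ and forming a clique in $G_i$. $P_r(k)$ is the smallest integer $n$ such that there exists a $K_{k+1}$-free colour pattern $G_1,\dots,G_r$ on an $n$-element vertex set $V$ such that every colouring $V \to [r]$ yields a strongly monochromatic $K_k$. For a graph $F$, the $k$-independence number $\alpha_k(F)$ is the largest size of a vertex subset of $F$ containing no $K_k$. The Erdős–Rogers function $f_{k,k+1}(n)$ is the minimum of $\alpha_k(F)$ over all $K_{k+1}$-free graphs $F$ on $n$ vertices. *)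

(* Defs.v *)
From mathcomp Require Import all_boot.
Set Implicit Arguments. Unset Strict Implicit. Unset Printing Implicit Defensive.

Definition simple_graph (V : finType) (E : {set V * V}) : bool :=
  [forall x : V, (x, x) \notin E] &&
  [forall x : V, forall y : V, ((x, y) \in E) ==> ((y, x) \in E)].

Definition is_clique (V : finType) (E : {set V * V}) (S : {set V}) : bool :=
  [forall x in S, forall y in S, (x != y) ==> ((x, y) \in E)].

Definition has_K (V : finType) (k : nat) (E : {set V * V}) : bool :=
  [exists S : {set V}, (#|S| == k) && is_clique E S].

Definition alpha_k (V : finType) (k : nat) (E : {set V * V}) : nat :=
  \max_(S : {set V} | ~~ [exists T : {set V},
        [&& T \subset S, #|T| == k & is_clique E T]]) #|S|.

Definition f_ER (k n : nat) : nat :=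
  \big[minn/n]_(E : {set 'I_n * 'I_n} | simple_graph E && ~~ has_K k.+1 E)
     alpha_k k E.

Definition Kfree_pattern (V : finType) (r k : nat) (G : 'I_r -> {set V * V}) : Prop :=
  (forall i, simple_graph (G i)) /\
  (forall i j, i != j -> [disjoint G i & G j]) /\
  (forall i, ~~ has_K k.+1 (G i)).

Definition forces_smono (V : finType) (r k : nat) (G : 'I_r -> {set V * V}) : Prop :=
  forall c : V -> 'I_r, exists (i : 'I_r) (S : {set V}),
    [/\ #|S| = k, (forall x, x \in S -> c x = i) & is_clique (G i) S].

Definition P_good (r k n : nat) : Prop :=
  exists G : 'I_r -> {set 'I_n * 'I_n}, @Kfree_pattern _ r k G /\ @forces_smono _ r k G.

Definition is_P (r k n : nat) : Prop :=
  P_good r k n /\ forall m, P_good r k m -> n <= m.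

(* Main.v *)
Require Import Defs.
From mathcomp Require Import all_boot.

Lemma clique_img (V W : finType) (g : W -> V) (E : {set V * V}) (T : {set W}) :
  is_clique [set e | (g e.1, g e.2) \in E] T -> injective g -> is_clique E (g @: T).
Proof.
move=> /forallP HT ginj; apply/forallP=> x; apply/implyP=> /imsetP [a Ha ->].
apply/forallP=> y; apply/implyP=> /imsetP [b Hb ->]; apply/implyP=> Hne.
have := forallP (implyP (HT a) Ha) b; move/implyP/(_ Hb)/implyP.
have : a != b by apply: contraNneq Hne => ->.
by move=> H /(_ H); rewrite inE.
Qed.

Lemma key (n r' k p : nat) (G : 'I_r'.+1 -> {set 'I_n * 'I_n}) (S : {set 'I_n})
  (g : 'I_p -> 'I_n) :
  injective g -> (forall x, x \notin S -> exists y, g y = x) ->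
  (forall y, g y \notin S) ->
  @Kfree_pattern _ _ k G -> @forces_smono _ _ k G ->
  ~~ [exists T : {set 'I_n}, [&& T \subset S, #|T| == k & is_clique (G ord_max) T]] ->
  P_good r' k p.
Proof.
move=> ginj gsurj gout [Gs [Gd Gk]] Gf HS.
pose w := widen_ord (leqnSn r').
exists (fun i => [set e | (g e.1, g e.2) \in G (w i)]); split; first split.
- move=> i; have /andP [/forallP H1 /forallP H2] := Gs (w i).
  apply/andP; split; apply/forallP => x.
    by rewrite inE /=; apply: H1.
  apply/forallP=> y; rewrite !inE /=; exact: (forallP (H2 (g x)) (g y)).
- split.
  + move=> i j Hij; apply/pred0P => e /=; apply/negbTE/negP => /andP [].
    rewrite !inE => Hi Hj.
    have Hwij : w i != w j.
      by apply: contra Hij => /eqP /(congr1 val) /= E; apply/eqP/val_inj.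
    by have := pred0P (Gd _ _ Hwij) (g e.1, g e.2); rewrite /= Hi Hj.
  + move=> i; apply/negP => /existsP [T /andP [/eqP HT Hcl]].
    have := Gk (w i); move/negP; apply; apply/existsP; exists (g @: T).
    by rewrite card_imset // HT eqxx /=; apply: clique_img.
- move=> c'.
  pose c := fun x : 'I_n => match [pick y | g y == x] with
                            | Some y => w (c' y) | None => ord_max end.
  have [i [T [HT Hc Hcl]]] := Gf c.
  have cS : forall x, x \in T -> i = ord_max -> x \in S.
    move=> x Hx Hi; apply: contraT => Hn; have [y Hy] := gsurj x Hn.
    have := Hc x Hx; rewrite /c; case: pickP => [z /eqP Hz|/(_ y)]; last by rewrite Hy eqxx.
    move=> Hwz; move: Hi; rewrite -Hwz => /(congr1 val) /=.
    by move=> E; have := ltn_ord (c' z); rewrite E ltnn.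
  case: (eqVneq i ord_max) => Hi.
    exfalso; move/negP: HS; apply; apply/existsP; exists T.
    apply/and3P; split; [apply/subsetP => x Hx; exact: cS | by rewrite HT | by rewrite -Hi].
  have ilt : i < r'.
    by move: (ltn_ord i); rewrite ltnS leq_eqVlt => /orP [/eqP E|//];
      move: Hi; rewrite (_ : i = ord_max) ?eqxx //; apply: val_inj.
  pose i' := Ordinal ilt.
  have Hwi : w i' = i by apply: val_inj.
  have Tg : forall x, x \in T -> exists y, g y = x.
    move=> x Hx; apply: gsurj; apply/negP => HxS.
    have := Hc x Hx; rewrite /c; case: pickP => [z /eqP Hz|_].
      by move=> _; move: HxS; rewrite -Hz (negbTE (gout z)).
    by move=> E; move: Hi; rewrite -E eqxx.
  exists i', [set y | g y \in T]; split.
  + have E : g @: [set y | g y \in T] = T.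
      apply/setP => x; apply/imsetP/idP.
        by move=> [y]; rewrite inE => H ->.
      by move=> Hx; have [y Hy] := Tg x Hx; exists y; rewrite ?inE Hy.
    by rewrite -HT -[in RHS]E card_imset.
  + move=> y; rewrite inE => Hy; have := Hc _ Hy; rewrite /c.
    case: pickP => [z /eqP Hz|/(_ y)]; last by rewrite eqxx.
    rewrite -Hwi => /(congr1 val) /= E; apply: val_inj => /=.
    by rewrite -E; congr (nat_of_ord (c' _)); apply: ginj.
  + apply/forallP => x; apply/implyP; rewrite inE => Hx.
    apply/forallP => y; apply/implyP; rewrite inE => Hy; apply/implyP => Hxy.
    rewrite inE /= Hwi.
    have := forallP (implyP (forallP Hcl (g x)) Hx) (g y).
    move/implyP/(_ Hy)/implyP; apply.
    by apply: contra Hxy => /eqP /ginj ->.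
Qed.

Lemma bigmin_le_seq (I : eqType) (s : seq I) (P : pred I) (F : I -> nat) d x :
  x \in s -> P x -> \big[minn/d]_(i <- s | P i) F i <= F x.
Proof.
elim: s => [//|a s IH]; rewrite inE big_cons => /orP [/eqP <- Px|Hs Px].
  by rewrite Px geq_minl.
case: (P a); last exact: IH.
by apply: leq_trans (geq_minr _ _) (IH Hs Px).
Qed.

Theorem proposition3p2 (r k : nat) (hr : 2 <= r) (hk : 2 <= k) (n m : nat) :
  is_P r k n -> is_P r.-1 k m -> m + f_ER k n <= n.
Proof.
case: r hr => [|r'] // hr [[G [GK GF]] _] [_ Hm] /=.
have [GS _] := GK.
pose P := fun S : {set 'I_n} => ~~ [exists T : {set 'I_n},
        [&& T \subset S, #|T| == k & is_clique (G ord_max) T]].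
have P0 : 0 < #|[pred S | P S]|.
  apply/card_gt0P; exists set0; rewrite inE /P; apply/negP => /existsP [T].
  rewrite subset0 => /andP [/eqP -> /andP [/eqP Hk0]]; move: Hk0; rewrite cards0 => Hk0.
  by move: hk; rewrite -Hk0.
have [S HS Hmax] := eq_bigmax_cond (fun S : {set 'I_n} => #|S|) P0.
have Hf : f_ER k n <= #|S|.
  rewrite -Hmax (_ : \max_(i in [pred S | P S]) #|i| = alpha_k k (G ord_max)) //.
  rewrite /f_ER; apply: bigmin_le_seq; first by rewrite mem_index_enum.
  by rewrite GS /=; have [_ [_ H]] := GK; apply: H.
have Hp : P_good r' k #|~: S|.
  apply: (@key n r' k _ G S (@enum_val _ (mem (~: S)))) => //.
  - exact: enum_val_inj.
  - move=> x Hx; have Hx' : x \in mem (~: S) by rewrite inE.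
    by exists (enum_rank_in Hx' x); rewrite enum_rankK_in.
  - by move=> y; have := enum_valP y; rewrite inE.
have := Hm _ Hp; rewrite cardsCs setCK card_ord => H1.
have HSn : #|S| <= n by have := max_card (mem S); rewrite card_ord.
by apply: leq_trans (leq_add H1 Hf) _; rewrite subnK.
Qed.
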